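(* Suppose $\frac2{n+1}<R\le1$ and let $\ell_2=\min\{n,\lfloor n/R\rfloor\}$ (so here $\ell_2=n$). Then for every bid set $B_{\mathcal D}$ of $\mathcal D$ (a multiset of $n$ nonnegative reals with sum $\beta$), $$W(\pi_{\rm unif},B_{\mathcal D})\ge f(\ell_2).$$
   Context: Position-randomized auction with two bidders $\mathcal A$ and $\mathcal D$ and $n\ge1$ objects. $\mathcal D$ has budget $\beta>0$ and $\mathcal A$ has budget $R\beta$ with $R>0$. A bidding algorithm of a bidder is a pair $(\pi,B)$: $B$ (the bid set) is a multiset of $n$ nonnegative reals whose sum is at most the bidder's budget, and $\pi$ is a randomized algorithm permuting sequences of length $n$. Applying $\pi$ to a listing of $B$ gives the final bid sequence, whose $i$-th entry is the bid on object $i$. The two bidders' permutations are independent. Each object goes to the higher bid; on a tie each bidder wins it with probability $1/2$. $w(\pi_{\mathcal A},\pi_{\mathcal D},B_{\mathcal A},B_{\mathcal D})$ is the expected number of objects won by $\mathcal A$. $W(\pi_{\mathcal D},B_{\mathcal D})$ is its supremum over all bidding algorithms $(\pi_{\mathcal A},B_{\mathcal A})$ of $\mathcal A$. $\pi_{\rm unif}$ applies a uniformly random permutation. For $x,y>0$, $\mathrm{less}(x,y)=y(\lceil x/y\rceil-1)$. For $\ell=1,\dots,n$, let $R_\ell=\mathrm{less}(R,\frac2{\ell(\ell+1)})$ and $f(\ell)=n-\ell+\frac{\ell(\ell+1)R_\ell}{2n}$. *)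

(* Defs.v *)
From HB Require Import structures.
From mathcomp Require Import all_boot all_order all_algebra all_fingroup.
From mathcomp Require Import boolp classical_sets reals.
Set Implicit Arguments. Unset Strict Implicit. Unset Printing Implicit Defensive.
Import Order.TTheory GRing.Theory Num.Theory.
Local Open Scope ring_scope.
Local Open Scope classical_set_scope.

Section Auction.
Variable R : realType.

(* A randomized permutation algorithm on sequences of length n:
   a probability distribution on the permutations of the positions 'I_n. *)
Definition perm_distr (n : nat) (p : {perm 'I_n} -> R) : Prop :=
  (forall s, 0 <= p s) /\ \sum_(s : {perm 'I_n}) p s = 1.

Definition pi_unif (n : nat) : {perm 'I_n} -> R :=
  fun _ => (#|{perm 'I_n}|%:R)^-1.

Definition bid_set (n : nat) (budget : R) (b : 'I_n -> R) : Prop :=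
  (forall i, 0 <= b i) /\ \sum_i b i <= budget.

(* Expected gain of A on one object, with A bidding a and D bidding d. *)
Definition win (a d : R) : R :=
  if d < a then 1 else if a == d then 2^-1 else 0.

(* Final bid sequence of a bidder: applying permutation s to the listing b
   gives the sequence i |-> b (s i).
   w(pi_A, pi_D, B_A, B_D) = expected number of objects won by A,
   the two permutations being independent. *)
Definition w (n : nat) (pA pD : {perm 'I_n} -> R) (bA bD : 'I_n -> R) : R :=
  \sum_(sA : {perm 'I_n}) \sum_(sD : {perm 'I_n})
     pA sA * pD sD * \sum_(i < n) win (bA (sA i)) (bD (sD i)).

Definition W (n : nat) (rho beta : R) (pD : {perm 'I_n} -> R) (bD : 'I_n -> R) : R :=
  sup [set x | exists (pA : {perm 'I_n} -> R) (bA : 'I_n -> R),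
          perm_distr pA /\ bid_set (rho * beta) bA /\ x = w pA pD bA bD].

Definition less (x y : R) : R := y * ((Num.ceil (x / y))%:~R - 1).

Definition R_ell (rho : R) (l : nat) : R := less rho (2 / (l * l.+1)%:R).

Definition f (n : nat) (rho : R) (l : nat) : R :=
  n%:R - l%:R + (l * l.+1)%:R * R_ell rho l / (2 * n%:R).

Definition ell2 (n : nat) (rho : R) : nat :=
  minn n `|Num.floor (n%:R / rho)|%N.

End Auction.
Arguments W {R} n rho beta pD bD.
Arguments pi_unif R n _ : clear implicits.
Arguments ell2 {R} n rho.

(* Main.v *)
Require Import Defs.
From HB Require Import structures.
From mathcomp Require Import all_boot all_order all_algebra all_fingroup.
From mathcomp Require Import boolp classical_sets reals.
From mathcomp Require Import zify ring lra.
Import Order.TTheory GRing.Theory Num.Theory.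
Local Open Scope ring_scope.


Section Core.
Context {R : realType}.

Lemma round_ex n (pi d : 'I_n -> R) (D : nat) : (D <= n)%N ->
  (forall i, 0 <= pi i <= 1) -> \sum_i pi i = D%:R ->
  exists T : {set 'I_n}, #|T| = D /\ \sum_i pi i * d i <= \sum_(i in T) d i.
Proof.
move=> hD hpi hsum.
pose T0 := [set widen_ord hD j | j : 'I_D].
have hT0 : #|T0| == D.
  rewrite card_imset ?card_ord //.
  by move=> a b /(congr1 val) /= /val_inj.
pose F := (fun T : {set 'I_n} => \sum_(i in T) d i).
case: (@arg_maxP _ R _ T0 (fun T : {set 'I_n} => #|T| == D) F hT0) => T /eqP hT Tmax.
exists T; split => //.
have swap : forall i j, i \in T -> j \notin T -> d j <= d i.
  move=> i j hi hj.
  have hc : #|j |: (T :\ i)| == D.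
    rewrite cardsU1 in_setD1 (negbTE hj) andbF /= add1n.
    by rewrite (cardsD1 i T) hi add1n in hT; rewrite -hT.
  have := Tmax _ hc.
  rewrite /F big_setU1 /=; last by rewrite in_setD1 (negbTE hj) andbF.
  rewrite (big_setD1 i hi) /=.
  lra.
pose X := \sum_(i in T) (1 - pi i) * d i.
pose Y := \sum_(j | j \notin T) pi j * d j.
pose A := \sum_(i in T) (1 - pi i).
pose B := \sum_(j | j \notin T) pi j.
have e1 : \sum_i pi i * d i = \sum_(i in T) pi i * d i + Y by rewrite (bigID (mem T)).
have e2 : \sum_(i in T) d i = \sum_(i in T) pi i * d i + X.
  by rewrite /X -big_split /=; apply: eq_bigr => i _; ring.
have e3 : A = B.
  have : \sum_i pi i = \sum_(i in T) pi i + B by rewrite (bigID (mem T)).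
  rewrite hsum /A sumrB sumr_const hT => ->.
  lra.
have hA : 0 <= A by apply: sumr_ge0 => i _; case/andP: (hpi i) => _ h; lra.
have e4 : A * Y <= B * X.
  have -> : A * Y = \sum_(i in T) \sum_(j | j \notin T) (1 - pi i) * pi j * d j.
    rewrite /A /Y mulr_suml; apply: eq_bigr => i _; rewrite mulr_sumr.
    by apply: eq_bigr => j _; ring.
  have -> : B * X = \sum_(i in T) \sum_(j | j \notin T) (1 - pi i) * pi j * d i.
    rewrite /X /B mulrC mulr_suml; apply: eq_bigr => i _; rewrite mulr_sumr.
    by apply: eq_bigr => j _; ring.
  apply: ler_sum => i hi.
  apply: ler_sum => j hj.
  have := swap i j hi hj.
  case/andP: (hpi i) => hi1 hi2; case/andP: (hpi j) => hj1 hj2.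
  move=> hdij.
  have h1 : 0 <= (1 - pi i) * pi j by apply: mulr_ge0; lra.
  have := ler_wpM2l h1 hdij. lra.
rewrite e1 e2.
case: (ltrgt0P A) hA => [hApos|//|hA0] _.
  have : A * Y <= A * X by rewrite {2}e3.
  rewrite ler_pM2l //; lra.
have hX : X = 0.
  rewrite /X big1 // => i hi.
  have hge : forall k, k \in T -> 0 <= 1 - pi k.
    by move=> k _; case/andP: (hpi k) => _ h; lra.
  by rewrite (psumr_eq0P hge hA0 hi) mul0r.
have hY : Y = 0.
  rewrite /Y big1 // => j hj.
  have hB : B = 0 by rewrite -e3.
  have hge : forall k, k \notin T -> 0 <= pi k.
    by move=> k _; case/andP: (hpi k).
  by rewrite (psumr_eq0P hge hB hj) mul0r.
rewrite hX hY; lra.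
Qed.

Lemma avg_ex (f : nat -> R) {lo hi} : (lo <= hi)%N ->
  exists a, [/\ (lo <= a)%N, (a <= hi)%N &
    (hi - lo).+1%:R * f a <= \sum_(lo <= i < hi.+1) f i].
Proof.
move=> hlh.
set S := \sum_(lo <= i < hi.+1) f i.
case: (boolP [exists a : 'I_hi.+1, (lo <= a)%N && ((hi - lo).+1%:R * f a <= S)]).
  case/existsP=> a /andP[ha1 ha2]; exists a; split => //.
  by rewrite -ltnS ltn_ord.
rewrite negb_exists => /forallP H.
have Hlt : forall i, (lo <= i < hi.+1)%N -> S < (hi - lo).+1%:R * f i.
  move=> i /andP[h1 h2]; have := H (Ordinal h2).
  by rewrite /= h1 /= -ltNge.
have := ltr_sum_nat (hlh : (lo < hi.+1)%N) Hlt.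

rewrite sumr_const_nat -mulr_sumr -/S.
have -> : (hi.+1 - lo = (hi - lo).+1)%N by lia.
rewrite -mulr_natl; lra.
Qed.

Lemma pair_ex (e : nat -> R) {lo hi} : (lo <= hi)%N ->
  exists a, [/\ (lo <= a)%N, (a <= hi)%N &
    (hi - lo).+1%:R * (e a + e (lo + hi - a)%N) <= 2 * \sum_(lo <= i < hi.+1) e i].
Proof.
move=> hlh.
have [a [h1 h2 h3]] := avg_ex (fun a => e a + e (lo + hi - a)%N) hlh.
exists a; split => //; move: h3; rewrite big_split /=.
suff -> : \sum_(lo <= i < hi.+1) e (lo + hi - i)%N = \sum_(lo <= i < hi.+1) e i.
  by move=> h; lra.
rewrite big_nat_rev /=; apply: eq_big_nat => i /andP[hi1 hi2].
by congr e; lia.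
Qed.

Definition rep (q : nat) (s : seq nat) := flatten (nseq q s).

Lemma rep_size q s : size (rep q s) = (q * size s)%N.
Proof. by elim: q => //= q IH; rewrite size_cat -/(rep q s) IH mulSn. Qed.

Lemma rep_sumn q s : sumn (rep q s) = (q * sumn s)%N.
Proof. by elim: q => //= q IH; rewrite sumn_cat -/(rep q s) IH mulSn. Qed.

Lemma rep_sum (e : nat -> R) q s :
  \sum_(v <- rep q s) e v = q%:R * \sum_(v <- s) e v.
Proof.
elim: q => [|q IH]; first by rewrite big_nil mul0r.
by rewrite /= big_cat /= -/(rep q s) IH mulrSr mulrDl mul1r addrC.
Qed.

Lemma rep_all (p : pred nat) q s : all p s -> all p (rep q s).
Proof. by move=> h; elim: q => //= q IH; rewrite all_cat h. Qed.

Lemma tele (e : nat -> R) n : e 0%N = 0 ->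
  \sum_(i < n) e i.+1 = \sum_(i < n) (n - i)%:R * (e i.+1 - e i).
Proof.
move=> e0; elim: n => [|n IH]; first by rewrite !big_ord0.
rewrite !big_ord_recr /= IH subSnn mul1r.
have -> : \sum_(i < n) (n.+1 - i)%:R * (e i.+1 - e i) =
          \sum_(i < n) (n - i)%:R * (e i.+1 - e i) + \sum_(i < n) (e i.+1 - e i).
  rewrite -big_split /=; apply: eq_bigr => i _.
  have -> : (n.+1 - i = (n - i) + 1)%N by have := ltn_ord i; lia.
  by rewrite natrD; ring.
have -> : \sum_(i < n) (e i.+1 - e i) = e n by
  rewrite -(big_mkord xpredT (fun i => e i.+1 - e i)) telescope_sumr // e0 subr0.
ring.
Qed.

Lemma tri_sum n : \sum_(i < n) (n - i)%:R = (\sum_(i < n) i.+1)%N%:R :> R.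
Proof.
have := tele (fun i => i%:R) n (erefl _).
rewrite natr_sum => ->; apply: eq_bigr => i _.
by rewrite -natrB // subSnn mulr1.
Qed.

Lemma tri_nat n : ((\sum_(i < n) i.+1).*2 = n * n.+1)%N.
Proof.
elim: n => [|n IH]; first by rewrite big_ord0.
rewrite big_ord_recr /= doubleD IH; lia.
Qed.

Lemma xy_ineq {n j E S cp cm cy cb NN : R} : 0 <= j -> j + 1 <= n -> 2*NN = n*(n+1) ->
  (j+1)*cp <= 2*S -> n*cm <= 2*E -> (n - j)*cy <= 2*(E - S) -> cb <= cp + cm -> cb <= cy -> NN*cb <= (n+1+j)*E.
Proof. move=> hj hjn hN h1 h2 h3 h4 h5.
have a1 : (j+1)*cb <= (j+1)*(cp+cm) by apply: ler_wpM2l => //; lra.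
have a2 : (n-j)*cb <= (n-j)*cy by apply: ler_wpM2l => //; lra.
have a3 : n*((j+1)*cp) <= n*(2*S) by apply: ler_wpM2l => //; lra.
have a4 : (j+1)*(n*cm) <= (j+1)*(2*E) by apply: ler_wpM2l => //; lra.
have a5 : n*((n-j)*cy) <= n*(2*(E-S)) by apply: ler_wpM2l => //; lra.
have a6 : n*((n+1)*cb) <= n*((j+1)*(cp+cm) + (n-j)*cy) by apply: ler_wpM2l => //; lra.
have : 2 * (NN * cb) <= 2 * ((n+1+j)*E).
  have -> : 2 * (NN*cb) = n*((n+1)*cb).
    have e : 2*(NN*cb) = (2*NN)*cb by ring.
    by rewrite e hN; ring.
  have e1 : n*((j+1)*(cp+cm) + (n-j)*cy) = n*((j+1)*cp) + (j+1)*(n*cm) + n*((n-j)*cy) by ring.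
  lra.
lra.
Qed.
Lemma p_ineq (n E cm NN : R) : 0 <= n -> 2*NN = n*(n+1) -> n*cm <= 2*E -> NN*cm <= (n+1)*E.
Proof. move=> hn hN h.
have : (n+1)*(n*cm) <= (n+1)*(2*E) by apply: ler_wpM2l => //; lra.
have -> : (n+1)*(n*cm) = 2*(NN*cm).
  have e : 2*(NN*cm) = (2*NN)*cm by ring.
  by rewrite e hN; ring.
lra. Qed.

Lemma pn_ineq (n E cm NN : R) : 0 <= n -> 2*NN = n*(n+1) -> (n+1)*cm <= 2*E -> NN*cm <= n*E.
Proof. move=> hn hN h.
have : n*((n+1)*cm) <= n*(2*E) by apply: ler_wpM2l => //; lra.
have -> : n*((n+1)*cm) = 2*(NN*cm).
  have e : 2*(NN*cm) = (2*NN)*cm by ring.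
  by rewrite e hN; ring.
lra. Qed.

Lemma comb {NN q cP cB E n1 r : R} : 0 <= q -> NN*cP <= n1*E -> NN*cB <= r*E ->
  NN*(q*cP + cB) <= (q*n1 + r)*E.
Proof. move=> hq h1 h2.
have := ler_wpM2l hq h1.
have -> : NN*(q*cP + cB) = q*(NN*cP) + NN*cB by ring.
have -> : (q*n1 + r)*E = q*(n1*E) + r*E by ring.
lra. Qed.

Lemma sum2 (e : nat -> R) x y : \sum_(v <- [:: x; y]) e v = e x + e y.
Proof. by rewrite unlock /= addr0. Qed.

Lemma sum4 (e : nat -> R) x y z w : \sum_(v <- [:: x; y; z; w]) e v = e x + e y + (e z + e w).
Proof. by rewrite unlock /= addr0 !addrA. Qed.

Lemma sumE1 (e : nat -> R) n : \sum_(1 <= i < n.+1) e i = \sum_(i < n) e i.+1.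
Proof. by rewrite big_add1 /= big_mkord. Qed.

Lemma sumE0 (e : nat -> R) n : e 0%N = 0 -> \sum_(0 <= i < n.+1) e i = \sum_(i < n) e i.+1.
Proof. by move=> e0; rewrite big_nat_recl // e0 add0r big_mkord. Qed.

Lemma core (e : nat -> R) n k NN :
  (0 < n)%N -> (n <= k)%N -> (k < NN)%N -> NN.*2 = (n * n.+1)%N -> e 0%N = 0 ->
  exists s : seq nat, [/\ (size s <= n)%N, all (fun v => v <= n)%N s, (k <= sumn s)%N &
     NN%:R * \sum_(v <- s) e v <= k%:R * \sum_(i < n) e i.+1].
Proof.
move=> hn hnk hkN hNN e0.
set E := \sum_(i < n) e i.+1.
have hNNs : (\sum_(i < n) i.+1)%N = NN by have := tri_nat n; lia.
have hNNR : 2 * NN%:R = n%:R * (n%:R + 1) :> R.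
  by rewrite natr1 -!natrM mul2n hNN.
case: (leqP ((NN - k).*2) n.+1) => hcase.
  set D := (NN - k)%N.
  have hDn : (D <= n)%N by rewrite /D; lia.
  have NNpos : 0 < NN%:R :> R by rewrite ltr0n; lia.
  pose pi := fun i : 'I_n => (n - i)%:R * D%:R / NN%:R : R.
  have hpi : forall i, 0 <= pi i <= 1.
    move=> i; apply/andP; split.
      by rewrite /pi divr_ge0 // mulr_ge0.
    rewrite /pi ler_pdivrMr // mul1r -natrM ler_nat.
    have : ((n - i) * D <= n * D)%N by apply: leq_mul => //; exact: leq_subr.
    move/leq_trans; apply; rewrite /D; nia.
  have hsum : \sum_i pi i = D%:R.
    rewrite /pi -!mulr_suml tri_sum hNNs mulrAC divff ?mul1r //.
    by rewrite gt_eqF.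
  have [T [hT hle]] := @round_ex n pi (fun i : 'I_n => e i.+1 - e i) D hDn hpi hsum.
  exists [seq (i.+1 - (i \in T))%N | i : 'I_n <- enum 'I_n].
  split.
  - by rewrite size_map size_enum_ord.
  - apply/allP => v /mapP[i _ ->]; apply: leq_trans (leq_subr _ _) (ltn_ord i).
  - have hs : (sumn [seq (i.+1 - (i \in T))%N | i : 'I_n <- enum 'I_n] + #|T| = NN)%N.
      rewrite sumnE big_map big_enum /= -sum1_card -hNNs.
      rewrite (big_mkcond (fun i => i \in T)) /= -big_split /=.
      by apply: eq_bigr => i _; case: (i \in T) => /=; lia.
    rewrite /D in hT; lia.
  - rewrite big_map big_enum /=.
    have hc : \sum_(i : 'I_n) e (i.+1 - (i \in T))%N = E - \sum_(i in T) (e i.+1 - e i).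
      rewrite /E (big_mkcond (fun i => i \in T)) /= -sumrB.
      by apply: eq_bigr => i _; case: (i \in T) => /=; rewrite ?subn1 /=; ring.
    have hpiE : \sum_i pi i * (e i.+1 - e i) = D%:R / NN%:R * E.
      rewrite /E (tele e n e0) mulr_sumr; apply: eq_bigr => i _; rewrite /pi; ring.
    rewrite hc; move: hle; rewrite hpiE => hle.
    set Z := \sum_(i in T) _ in hc hle *.
    have hkR : k%:R = NN%:R - D%:R :> R by rewrite -natrB ?leq_subr // /D; congr _%:R; lia.
    have hNZ : D%:R * E <= NN%:R * Z.
      have := ler_wpM2l (ltW NNpos) hle.
      have -> : NN%:R * (D%:R / NN%:R * E) = D%:R * E :> R.
        by field; rewrite gt_eqF.
      done.
    rewrite hkR; lra.
set q := ((k - n) %/ n.+1)%N.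
set r := (n + (k - n) %% n.+1)%N.
have hk : k = (q * n.+1 + r)%N.
  by rewrite /q /r; have := divn_eq (k - n) n.+1; lia.
have hr : (r <= n + n)%N.
  by rewrite /r leq_add2l -ltnS ltn_pmod.
have hnr : (n <= r)%N by rewrite /r leq_addr.
have [a [ha1 ha2 hPa]] := pair_ex e (hn : (1 <= n)%N).
rewrite sumE1 -/E subn1 /= prednK // in hPa.
have hPa' : NN%:R * (e a + e (1 + n - a)%N) <= (n%:R + 1) * E.
  exact: p_ineq (ler0n _ _) hNNR hPa.
case: (eqVneq r n) => hrn.
  have [c [hc1 hc2 hNc]] := pair_ex e (leq0n n).
  rewrite sumE0 // -/E subn0 in hNc.
  exists (rep q [:: a; (1 + n - a)%N] ++ [:: c; (0 + n - c)%N]).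
  split.
  - rewrite size_cat rep_size /=; nia.
  - rewrite all_cat rep_all /=; last by rewrite /= ha2; lia.
    by rewrite hc2; lia.
  - rewrite sumn_cat rep_sumn /=; lia.
  - rewrite big_cat rep_sum !sum2.
    have hNc' : NN%:R * (e c + e (0 + n - c)%N) <= n%:R * E.
      by apply: pn_ineq (ler0n _ _) hNNR _; rewrite natr1.
    rewrite hk natrD natrM -natr1.
    by apply: comb => //; rewrite hrn.
set j := (r - n.+1)%N.
have hj : (j < n)%N by rewrite /j; lia.
have hrj : r = (n.+1 + j)%N by rewrite /j; lia.
have [p [hp1 hp2 hpre]] := pair_ex e (leq0n j).
have [y [hy1 hy2 hsuf]] := pair_ex e (hj : (j.+1 <= n)%N).
set S := \sum_(0 <= i < j.+1) e i in hpre.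
have hES : \sum_(j.+1 <= i < n.+1) e i = E - S.
  rewrite /E -(sumE0 e n e0) (big_cat_nat (leq0n j.+1)) /=; last by lia.
  by rewrite /S; ring.
have hnj : ((n - j.+1).+1 = n - j)%N by lia.
rewrite hES hnj natrB ?(ltnW hj) // in hsuf; rewrite subn0 -natr1 in hpre.
set X := [:: p; (0 + j - p)%N; a; (1 + n - a)%N].
set Y := [:: y; (j.+1 + n - y)%N].
set cX := e p + e (0 + j - p)%N + (e a + e (1 + n - a)%N).
set cY := e y + e (j.+1 + n - y)%N.
have hcb : exists2 base, [/\ (size base <= 4)%N, all (fun v => v <= n)%N base & sumn base = r] &
    NN%:R * \sum_(v <- base) e v <= r%:R * E.
  have hxy : forall cb, cb <= cX -> cb <= cY -> NN%:R * cb <= r%:R * E.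
    move=> cb h1 h2; rewrite hrj natrD -natr1.
    have hj1 : j%:R + 1 <= n%:R :> R by rewrite natr1 ler_nat.
    exact: (xy_ineq (ler0n _ j) hj1 hNNR hpre hPa hsuf h1 h2).
  case: (leP cX cY) => hXY.
    exists X; first by split => //=; lia.
    by rewrite sum4; apply: hxy.
  exists Y; first by split => //=; lia.
  by rewrite sum2; apply: hxy => //; apply: ltW.
case: hcb => base [hb1 hb2 hb3] hb4.
exists (rep q [:: a; (1 + n - a)%N] ++ base).
split.
- rewrite size_cat rep_size /=.
  have hr1 : (n < r)%N by rewrite ltn_neqAle eq_sym hrn hnr.
  have : (q * 2 + 4 <= n)%N by nia.
  lia.
- by rewrite all_cat rep_all //= ha2 /=; lia.
- rewrite sumn_cat rep_sumn hb3 /=; lia.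
- rewrite big_cat rep_sum sum2 hk natrD natrM -natr1.
  exact: comb.
Qed.

End Core.


Section Auc.
Context {R : realType}.

Lemma win_ge0 (a d : R) : 0 <= win a d.
Proof. by rewrite /win; case: ifP => _ //; case: ifP => _ //; rewrite invr_ge0 ler0n. Qed.

Lemma win_le1 (a d : R) : win a d <= 1.
Proof.
rewrite /win; case: ifP => _ //; case: ifP => _ //.
by rewrite invf_le1 // ?ler1n // ltr0n.
Qed.

Lemma win_lt (a d : R) : d < a -> win a d = 1.
Proof. by rewrite /win => ->. Qed.

Lemma perm_col n (h : 'I_n -> R) (i i' : 'I_n) :
  \sum_(s : {perm 'I_n}) h (s i) = \sum_(s : {perm 'I_n}) h (s i').
Proof.
rewrite (reindex_inj (mulgI (tperm i i'))) /=.
by apply: eq_bigr => s _; rewrite permM tpermL.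
Qed.

Lemma perm_avg n (g : 'I_n -> 'I_n -> R) : (0 < n)%N ->
  \sum_(s : {perm 'I_n}) \sum_i g i (s i) =
  #|{perm 'I_n}|%:R / n%:R * \sum_i \sum_j g i j.
Proof.
move=> hn.
rewrite exchange_big /= mulr_sumr; apply: eq_bigr => i _.
have key : n%:R * \sum_(s : {perm 'I_n}) g i (s i) =
           #|{perm 'I_n}|%:R * \sum_j g i j.
  have -> : n%:R * \sum_(s : {perm 'I_n}) g i (s i) =
            \sum_(i' : 'I_n) \sum_(s : {perm 'I_n}) g i (s i').
    rewrite [RHS](eq_bigr (fun _ => \sum_(s : {perm 'I_n}) g i (s i))); last first.
      by move=> i' _; apply: perm_col.
    by rewrite sumr_const card_ord mulr_natl.
  rewrite exchange_big /=.
  rewrite [LHS](eq_bigr (fun _ => \sum_j g i j)); last first.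
    by move=> s _; rewrite [RHS](reindex_inj (@perm_inj _ s)).
  by rewrite sumr_const mulr_natl.
have hn0 : n%:R != 0 :> R by rewrite pnatr_eq0 -lt0n.
apply: (mulfI hn0); rewrite key; field.
done.
Qed.


Lemma sum_pad (F : nat -> R) (s : seq nat) n : F 0%N = 0 -> (size s <= n)%N ->
  \sum_(t < n) F (nth 0%N s t) = \sum_(v <- s) F v.
Proof.
move=> F0 hs.
rewrite (big_nth 0%N) -(big_mkord xpredT (fun t => F (nth 0%N s t))).
rewrite (big_cat_nat (leq0n (size s)) hs) /=.
have -> : \sum_(size s <= i < n) F (nth 0%N s i) = 0.
  rewrite big_nat_cond big1 // => i /andP[/andP[hi _] _].
  by rewrite nth_default.
by rewrite addr0.
Qed.

Definition sbids {n} (bD : 'I_n -> R) := sort <=%R [seq bD j | j <- enum 'I_n].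
Definition ebid {n} (bD : 'I_n -> R) (v : nat) :=
  if v is v'.+1 then nth 0 (sbids bD) v' else 0.

Lemma sbids_size {n} (bD : 'I_n -> R) : size (sbids bD) = n.
Proof. by rewrite size_sort size_map size_enum_ord. Qed.

Lemma sbids_sorted {n} (bD : 'I_n -> R) : sorted <=%R (sbids bD).
Proof. by apply: sort_sorted; exact: le_total. Qed.

Lemma sbids_perm {n} (bD : 'I_n -> R) : perm_eq (sbids bD) [seq bD j | j <- enum 'I_n].
Proof. by rewrite perm_sort. Qed.

Lemma ebid_ge0 {n} (bD : 'I_n -> R) v : (forall i, 0 <= bD i) -> 0 <= ebid bD v.
Proof.
move=> hb; case: v => [|v] //=.
case: (ltnP v (size (sbids bD))) => hv; last by rewrite nth_default.
have : nth 0 (sbids bD) v \in [seq bD j | j <- enum 'I_n].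
  by rewrite -(perm_mem (sbids_perm bD)) mem_nth.
by case/mapP => j _ ->.
Qed.

Lemma ebid_sum {n} (bD : 'I_n -> R) : \sum_(i < n) ebid bD i.+1 = \sum_i bD i.
Proof.
rewrite /ebid /=.
have -> : \sum_(i < n) nth 0 (sbids bD) i = \sum_(x <- sbids bD) x.
  by rewrite (big_nth 0) sbids_size big_mkord.
rewrite (perm_big _ (sbids_perm bD)) big_map big_enum /=.
done.
Qed.

Lemma count_ebid {n} (bD : 'I_n -> R) v : (0 < v <= n)%N ->
  (v%:R : R) <= \sum_j (nat_of_bool (bD j <= ebid bD v)%R)%:R.
Proof.
case: v => [//|v] /= hv.
set x := nth 0 (sbids bD) v.
have hvs : (v < size (sbids bD))%N by rewrite sbids_size.
have hc : (v.+1 <= count (fun y : R => (y <= x)%R) (sbids bD))%N.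
  rewrite -(cat_take_drop v.+1 (sbids bD)) count_cat.
  apply: leq_trans (leq_addr _ _).
  have hsz : size (take v.+1 (sbids bD)) = v.+1 by rewrite size_takel.
  suff /eqP -> : count (fun y : R => (y <= x)%R) (take v.+1 (sbids bD)) == size (take v.+1 (sbids bD)).
    by rewrite hsz.
  rewrite -all_count; apply/(all_nthP 0) => a ha.
  rewrite hsz in ha; rewrite nth_take //.
  apply: (sorted_leq_nth le_trans le_refl 0 (sbids_sorted bD)).
  - by rewrite inE; apply: leq_trans ha _.
  - by rewrite inE.
  - by rewrite -ltnS.
move: hc; rewrite (seq.permP (sbids_perm bD)) count_map.
have -> : count (preim bD (fun y : R => (y <= x)%R)) (enum 'I_n) = (\sum_j nat_of_bool (bD j <= x)%R)%N.
  rewrite -big_enum /=; elim: (enum 'I_n) => [|y l IH]; first by rewrite big_nil.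
  by rewrite big_cons /= IH.
by move=> hc; rewrite -natr_sum ler_nat.
Qed.

End Auc.


Lemma pi_unif_distr (R : realType) n : perm_distr (pi_unif R n).
Proof.
have hc : (0 < #|{perm 'I_n}|)%N by apply/card_gt0P; exists 1%g.
split=> [s|]; first by rewrite /pi_unif invr_ge0 ler0n.
rewrite /pi_unif sumr_const.
set m := #|{perm 'I_n}|%:R.
have hm : m != 0 by rewrite /m pnatr_eq0 -lt0n.
have -> : m^-1 *+ #|{perm 'I_n}| = m^-1 * m by rewrite /m mulr_natr.
by rewrite mulVf.
Qed.

Lemma w_le_n (R : realType) n (pA pD : {perm 'I_n} -> R) bA bD :
  perm_distr pA -> perm_distr pD -> w pA pD bA bD <= n%:R.
Proof.
move=> [hA0 hA1] [hD0 hD1].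
rewrite /w.
apply: (@le_trans _ _ (\sum_(sA : {perm 'I_n}) \sum_(sD : {perm 'I_n}) pA sA * pD sD * n%:R)).
  apply: ler_sum => sA _; apply: ler_sum => sD _.
  apply: ler_wpM2l; first by apply: mulr_ge0.
  apply: (@le_trans _ _ (\sum_(i < n) (1 : R))); last by rewrite sumr_const card_ord.
  by apply: ler_sum => i _; apply: win_le1.
have -> : \sum_(sA : {perm 'I_n}) \sum_(sD : {perm 'I_n}) pA sA * pD sD * n%:R =
          \sum_(sA : {perm 'I_n}) pA sA * n%:R.
  apply: eq_bigr => sA _.
  by rewrite -mulr_suml -mulr_sumr hD1 mulr1.
by rewrite -mulr_suml hA1 mul1r.
Qed.

Theorem lemma6 (R : realType) (n : nat) (rho beta : R) (bD : 'I_n -> R) :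
  (1 <= n)%N -> 0 < beta ->
  2 / (n.+1)%:R < rho -> rho <= 1 ->
  (forall i, 0 <= bD i) -> \sum_i bD i = beta ->
  f n rho (ell2 n rho) <= W n rho beta (pi_unif R n) bD.
Proof.
move=> hn hbeta hrho hrho1 hbD hsum.
have hrho0 : 0 < rho.
  apply: lt_trans hrho; by rewrite divr_gt0 // ltr0n.
set NN := (\sum_(i < n) i.+1)%N.
have hNN : NN.*2 = (n * n.+1)%N := tri_nat n.
have hNNR : 2 * NN%:R = n%:R * (n%:R + 1) :> R.
  by rewrite natr1 -!natrM mul2n hNN.
have hn0 : n%:R != 0 :> R by rewrite pnatr_eq0 -lt0n.
have hnpos : 0 < n%:R :> R by rewrite ltr0n.
have NNpos : 0 < NN%:R :> R.
  have : 0 < 2 * NN%:R :> R by rewrite hNNR mulr_gt0 // ?ltr_wpDl // ?ler0n.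
  lra.
set y := 2 / (n * n.+1)%:R : R.
have hNN' : NN%:R = (n * n.+1)%:R / 2 :> R.
  by rewrite -hNN -mul2n natrM; field.
have hy : y = NN%:R^-1.
  rewrite /y hNN' invf_div //.
set c := Num.ceil (rho / y).
have hry : rho / y = rho * NN%:R by rewrite hy invrK.
have hcn : (n%:Z < c)%R.
  rewrite /c ceil_gt_int hry -[(n%:Z)%:~R]/(n%:R : R).
  have -> : n%:R = 2 / n.+1%:R * NN%:R :> R.
    have hn1 : n.+1%:R != 0 :> R by rewrite pnatr_eq0.
    by rewrite hNN' natrM; field; rewrite addrC natr1.
  by rewrite ltr_pM2r.
set k := `|c - 1|%N.
have hc1 : (0 <= c - 1)%R by lia.
have hkc : k%:R = (c - 1)%:~R :> R by rewrite /k natr_absz ger0_norm.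
have hnk : (n <= k)%N.
  rewrite -(ler_nat R) hkc -[(n%:R : R)]/((n%:Z)%:~R : R) ler_int; lia.
have hclt : (c - 1)%:~R < rho * NN%:R by rewrite -hry; apply: ceilB1_lt.
have hkN : (k < NN)%N.
  rewrite -(ltr_nat R) hkc; apply: lt_le_trans hclt _.
  by rewrite ger_pMl.
have [s [hs1 hs2 hs3 hs4]] := core (ebid bD) n k NN hn hnk hkN hNN (erefl _).
rewrite ebid_sum hsum in hs4.
have hl : ell2 n rho = n.
  rewrite /ell2; apply/minn_idPl.
  have : (n%:Z <= Num.floor (n%:R / rho))%R.
    rewrite floor_ge_int -[(n%:Z)%:~R]/(n%:R : R).
    by rewrite ler_pdivlMr //; apply: ler_piMr; rewrite ?ler0n.
  lia.
have hf : f n rho (ell2 n rho) = k%:R / n%:R.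
  rewrite hl /f /R_ell /less -/y -/c hkc intrD /= hy.
  have hn1 : n.+1%:R != 0 :> R by rewrite pnatr_eq0.
  rewrite hNN' natrM -[((-1)%:~R : R)]/(-1 : R); field.
  by rewrite addrC natr1 hn1 hn0.
rewrite hf.
have hkNN : k%:R < rho * NN%:R by rewrite hkc.
pose eps := (rho * beta - k%:R * beta / NN%:R) / n%:R.
have hkb : k%:R * beta / NN%:R < rho * beta.
  rewrite ltr_pdivrMr // mulrAC ltr_pM2r //.
have heps : 0 < eps by rewrite /eps divr_gt0 // subr_gt0.
pose bA := fun t : 'I_n => ebid bD (nth 0%N s t) + eps.
pose pA := fun sg : {perm 'I_n} => (if sg == 1%g then 1 else 0) : R.
have hpA : perm_distr pA.
  split => [sg|]; first by rewrite /pA; case: ifP.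
  rewrite (bigD1 1%g) //= /pA eqxx big1 ?addr0 // => sg /negbTE ->.
  done.
have hbA : bid_set (rho * beta) bA.
  split => [t|]; first by rewrite /bA addr_ge0 ?ebid_ge0 // ltW.
  rewrite /bA big_split /= sumr_const card_ord.
  rewrite (sum_pad (ebid bD) s n (erefl _) hs1).
  have hS : \sum_(v <- s) ebid bD v <= k%:R * beta / NN%:R.
    by rewrite ler_pdivlMr // [X in X <= _]mulrC.
  have -> : eps *+ n = rho * beta - k%:R * beta / NN%:R.
    by rewrite -mulr_natr /eps divfK.
  lra.
have hw : k%:R / n%:R <= w pA (pi_unif R n) bA bD.
  rewrite /w.
  have -> : \sum_(sA : {perm 'I_n}) \sum_(sD : {perm 'I_n})
      pA sA * pi_unif R n sD * \sum_(i < n) win (bA (sA i)) (bD (sD i)) =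
      \sum_(sD : {perm 'I_n}) pi_unif R n sD * \sum_(i < n) win (bA i) (bD (sD i)).
    rewrite (bigD1 1%g) //=.
    rewrite [X in _ + X]big1 ?addr0 => [|sg hsg]; last first.
      by apply: big1 => sD _; rewrite /pA (negbTE hsg) !mul0r.
    apply: eq_bigr => sD _; rewrite /pA eqxx mul1r; congr (_ * _).
    by apply: eq_bigr => i _; rewrite perm1.
  rewrite /pi_unif -mulr_sumr (perm_avg _ (fun i j => win (bA i) (bD j)) hn).
  set u := #|{perm 'I_n}|%:R.
  have hu : u != 0.
    by rewrite /u pnatr_eq0 -lt0n; apply/card_gt0P; exists 1%g.
  set X := \sum_i \sum_j _.
  have -> : u^-1 * (u / n%:R * X) = X / n%:R by rewrite mulrA mulKf // mulrC.
  rewrite ler_pM2r ?invr_gt0 //.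
  have hX : \sum_(i < n) (nth 0%N s i)%:R <= X.
    apply: ler_sum => i _.
    set v := nth 0%N s i.
    have hvn : (v <= n)%N.
      case: (ltnP i (size s)) => hi; last by rewrite /v nth_default.
      by move/allP: hs2; apply; rewrite mem_nth.
    case: (posnP v) => hv0.
      by rewrite hv0 sumr_ge0 // => j _; apply: win_ge0.
    apply: le_trans (count_ebid bD v _) _; first by rewrite hv0 hvn.
    apply: ler_sum => j _.
    case: (boolP (bD j <= ebid bD v)) => hb /=; last by rewrite win_ge0.
    rewrite win_lt // /bA -/v.
    by apply: le_lt_trans hb _; rewrite ltrDl.
  apply: le_trans hX.
  rewrite (sum_pad (fun v => v%:R) s n (erefl _) hs1) -natr_sum -sumnE ler_nat.
  done.
apply: le_trans hw _.
have hub : has_ubound [set x | exists (pA : {perm 'I_n} -> R) (bA : 'I_n -> R),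
          perm_distr pA /\ bid_set (rho * beta) bA /\ x = w pA (pi_unif R n) bA bD].
  exists n%:R => x [pA' [bA' [hpA' [_ ->]]]].
  exact: w_le_n hpA' (pi_unif_distr _ _).
apply: (ub_le_sup hub).
by exists pA, bA.
Qed.
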